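(* Let $G$ be a bipartite graph with bipartition $(X,Y)$ such that $|X|=|Y|=m\ge1$, and suppose there is a numbering $f$ of $G$ with $f(X)=[1,m]$. Then there is a numbering $F$ of $G\times K_2$ such that $F^{-1}([1,2m])=\widetilde X$ for one part $\widetilde X$ of a bipartition $(\widetilde X,\widetilde Y)$ of $G\times K_2$, and $str_F(G\times K_2)=5m+1$.
   Context: $G\times K_2$ denotes the Cartesian product of $G$ with the complete graph $K_2$. For a graph $G$ of order $p$, a numbering is a bijection $f:V(G)\to[1,p]$, where $[a,b]$ is the set of integers from $a$ to $b$; $str_f(G)=\max\{f(u)+f(v): uv\in E(G)\}$. *)

(* Defs.v *)
From mathcomp Require Import all_boot.
Set Implicit Arguments. Unset Strict Implicit. Unset Printing Implicit Defensive.

Definition simple_graph (V : finType) (e : rel V) : Prop :=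
  symmetric e /\ irreflexive e.

Definition is_bipartition (V : finType) (e : rel V) (A B : {set V}) : Prop :=
  [/\ A :&: B = set0, A :|: B = [set: V] &
      forall u v, e u v -> (u \in A) && (v \in B) || (u \in B) && (v \in A)].

Definition cartK2 (V : finType) (e : rel V) : rel (V * bool) :=
  fun p q => ((p.1 == q.1) && (p.2 != q.2)) || ((p.2 == q.2) && e p.1 q.1).

Definition numbering (V : finType) (f : V -> nat) : Prop :=
  injective f /\ (forall v, 1 <= f v <= #|V|).

Definition strength (V : finType) (e : rel V) (f : V -> nat) : nat :=
  \max_(u : V) \max_(v : V | e u v) (f u + f v).

(* Main.v *)
Require Import Defs.
From mathcomp Require Import all_boot.
From mathcomp Require Import zify.

Theorem mainTheorem14 (V : finType) (e : rel V) (X Y : {set V}) (m : nat) :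
  simple_graph e ->
  is_bipartition e X Y ->
  #|X| = m -> #|Y| = m -> 1 <= m ->
  (exists f : V -> nat, numbering f /\
     (forall i, (1 <= i <= m) <-> (exists2 x, x \in X & f x = i))) ->
  exists F : V * bool -> nat,
    numbering F /\
    (exists Xt Yt : {set V * bool},
        is_bipartition (cartK2 e) Xt Yt /\
        (forall w, w \in Xt <-> 1 <= F w <= 2 * m)) /\
    strength (cartK2 e) F = 5 * m + 1.
Proof.
move=> _ [XY0 XYT Eb] cX cY m1 [f [[finj frng] fX]].
have cV : #|V| = 2 * m.
  by rewrite -cardsT -XYT cardsU XY0 cards0 cX cY; lia.
have inY : forall v, v \notin X -> v \in Y.
  move=> v vX; have : v \in X :|: Y by rewrite XYT inE.
  by rewrite inE (negbTE vX).
have nXY : forall v, v \in Y -> v \notin X.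
  move=> v vY; apply/negP => vX.
  have : v \in X :&: Y by rewrite inE vX vY.
  by rewrite XY0 inE.
have fXr : forall v, v \in X -> 1 <= f v <= m.
  by move=> v vX; apply/fX; exists v.
have fYr : forall v, v \notin X -> m < f v <= 2 * m.
  move=> v vX; have := frng v; rewrite cV => /andP[h1 h2].
  rewrite h2 andbT ltnNge; apply/negP => hm.
  have [x xX fx] : exists2 x, x \in X & f x = f v by apply/fX; rewrite h1 hm.
  by move: vX; rewrite -(finj _ _ fx) xX.
pose F := fun w : V * bool => if w.1 \in X then (if w.2 then 2 * m + f w.1 else f w.1)
   else (if w.2 then f w.1 else 5 * m + 1 - f w.1).
have Frng : forall w, [/\ w.1 \in X -> ~~ w.2 -> 1 <= F w <= m,
                           w.1 \in X -> w.2 -> 2 * m < F w <= 3 * m,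
                           w.1 \notin X -> w.2 -> m < F w <= 2 * m &
                           w.1 \notin X -> ~~ w.2 -> 3 * m < F w <= 4 * m].
  move=> [v b]; rewrite /F /=; case: (boolP (v \in X)) => vX;
  (try have := fXr v vX); (try have := fYr v vX);
  case: b; split => //= _ _; lia.
exists F; split; [split|split].
- move=> [u a] [v b] h; suff [-> /finj ->] : a = b /\ f u = f v by [].
  move: h; rewrite /F /=.
  case: (boolP (u \in X)) => uX; case: (boolP (v \in X)) => vX;
  have := frng u; have := frng v; rewrite cV;
  (try have := fXr u uX); (try have := fXr v vX);
  (try have := fYr u uX); (try have := fYr v vX);
  case: a; case: b => /= *; first [exfalso; lia | split => //; lia].
- move=> w; rewrite card_prod card_bool cV; have [h1 h2 h3 h4] := Frng w.
  by case: (boolP (w.1 \in X)) => wX; case: (boolP w.2) => w2;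
   [have := h2 wX w2|have := h1 wX w2|have := h3 wX w2|have := h4 wX w2]; lia.
- exists [set w | (w.1 \in X) != w.2], [set w | (w.1 \in X) == w.2]; split.
  + split.
    * by apply/setP => w; rewrite !inE; case: eqP.
    * by apply/setP => w; rewrite !inE; case: eqP.
    * move=> [u a] [v b]; rewrite /cartK2 /= !inE.
      case/orP => /andP[/eqP <-].
        by case: a; case: b; case: (u \in X).
      move=> /= /Eb /orP[/andP[uX /nXY vX]|/andP[/nXY uX vX]].
        by rewrite uX (negbTE vX); case: a.
      by rewrite vX (negbTE uX); case: a.
  + move=> w; rewrite inE; have [h1 h2 h3 h4] := Frng w.
    case: (boolP (w.1 \in X)) => wX; case: (boolP w.2) => w2;
    [have := h2 wX w2|have := h1 wX w2|have := h3 wX w2|have := h4 wX w2];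
    move=> hh; split => // ?; lia.
- have edge : forall p q, cartK2 e p q -> F p + F q <= 5 * m + 1.
    move=> [u a] [v b]; rewrite /cartK2 /F /=.
    case/orP => /andP[/eqP <-].
      case: (boolP (u \in X)) => uX;
      (try have := fXr u uX); (try have := fYr u uX);
      case: a; case: b => //= *; lia.
    move=> /= /Eb /orP[/andP[uX /nXY vX]|/andP[/nXY uX vX]];
    rewrite ?uX ?vX ?(negbTE uX) ?(negbTE vX);
    (try have := fXr u uX); (try have := fYr u uX);
    (try have := fXr v vX); (try have := fYr v vX);
    case: a => /= *; lia.
  rewrite /strength; apply/eqP; rewrite eqn_leq; apply/andP; split.
    apply/bigmax_leqP => p _; apply/bigmax_leqP => q; exact: edge.
  have [y yY] : exists y, y \in Y.
    apply/set0Pn; apply/negP => /eqP Y0; move: cY; rewrite Y0 cards0; lia.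
  have yX := nXY y yY.
  apply: leq_trans (leq_bigmax_cond (y, false) isT).
  have ed : cartK2 e (y, false) (y, true) by rewrite /cartK2 /= eqxx.
  apply: leq_trans (leq_bigmax_cond (y, true) ed).
  rewrite /F /= (negbTE yX); have := fYr y yX; lia.
Qed.
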